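(* For every integer $n\ge 6$ and every integer $t$ with $1\le t\le n-3$, $\mathrm{wdim}_{2n-2t-1}(K_n\times K_n)=n^2-tn-\left\lfloor \frac{n}{t+1}\right\rfloor$.
   Context: $K_n\times K_n$ is the direct product of two complete graphs on $n$ vertices: vertex set $[n]\times[n]$ with $[n]=\{1,\dots,n\}$, and $(i,j)$ adjacent to $(i',j')$ iff $i\ne i'$ and $j\ne j'$. For a connected graph $G$ with distance $d_G$, vertices $x,y,z$ and $S\subseteq V(G)$, let $\Delta_z(x,y)=|d_G(x,z)-d_G(y,z)|$ and $\Delta_S(x,y)=\sum_{z\in S}\Delta_z(x,y)$. A set $S$ is a weak $k$-resolving set if $\Delta_S(x,y)\ge k$ for all distinct $x,y\in V(G)$, and $\mathrm{wdim}_k(G)$ is the minimum cardinality of a weak $k$-resolving set of $G$. *)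

(* Defs.v *)
From mathcomp Require Import all_boot.
Set Implicit Arguments. Unset Strict Implicit. Unset Printing Implicit Defensive.

Section Dist.
Variables (T : finType) (e : rel T).

Fixpoint ball (k : nat) (x : T) : {set T} :=
  match k with
  | 0 => [set x]
  | k'.+1 => ball k' x :|: [set y | [exists z in ball k' x, e z y]]
  end.

(* shortest-path distance: least k with y in ball k x (in a connected graph
   this is always < #|T|; otherwise the value #|T| is returned) *)
Definition gdist (x y : T) : nat := find (fun k => y \in ball k x) (iota 0 #|T|).

Definition absdiff (a b : nat) : nat := (a - b) + (b - a).

Definition Delta_z (z x y : T) : nat := absdiff (gdist x z) (gdist y z).

Definition Delta_S (S : {set T}) (x y : T) : nat := \sum_(z in S) Delta_z z x y.

Definition weak_k_resolving (k : nat) (S : {set T}) : Prop :=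
  forall x y : T, x != y -> k <= Delta_S S x y.

Definition is_wdim (k m : nat) : Prop :=
  (exists S : {set T}, weak_k_resolving k S /\ #|S| = m) /\
  (forall S : {set T}, weak_k_resolving k S -> m <= #|S|).
End Dist.

Definition KnxKn_adj (n : nat) : rel ('I_n * 'I_n) :=
  fun x y => (x.1 != y.1) && (x.2 != y.2).
Arguments KnxKn_adj n : clear implicits.

(* Main.v *)
Require Import Defs.
From mathcomp Require Import all_boot zify.
Set Implicit Arguments. Unset Strict Implicit. Unset Printing Implicit Defensive.

Definition D n (x y : 'I_n * 'I_n) : nat :=
  if x == y then 0 else if (x.1 != y.1) && (x.2 != y.2) then 1 else 2.

Lemma ord3 n (u v : 'I_n) : 3 <= n -> exists p : 'I_n, (p != u) && (p != v).
Proof.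
move=> n3.
have h0 : 0 < n by lia. have h1 : 1 < n by lia. have h2 : 2 < n by lia.
pose p0 := Ordinal h0. pose p1 := Ordinal h1. pose p2 := Ordinal h2.
case: (boolP ((p0 != u) && (p0 != v))) => [H|H]; first by exists p0.
case: (boolP ((p1 != u) && (p1 != v))) => [H1|H1]; first by exists p1.
exists p2; move: H H1; rewrite -!val_eqE /=; lia.
Qed.

Lemma gdistE n (x y : 'I_n * 'I_n) : 3 <= n -> gdist (KnxKn_adj n) x y = D x y.
Proof.
move=> n3.
rewrite /gdist card_prod card_ord.
have -> : iota 0 (n * n) = [:: 0, 1, 2 & iota 3 (n * n - 3)].
  have -> : n * n = 3 + (n * n - 3) by nia.
  by rewrite iotaD /= addKn.
rewrite /= !inE /D.
case: (boolP (x == y)) => [/eqP<-|xy]; first by rewrite !eqxx.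
rewrite eq_sym (negbTE xy) /=.
have b1 : [exists z in [set x], KnxKn_adj n z y] = (x.1 != y.1) && (x.2 != y.2).
  apply/existsP/idP => [[z]|H]; last by exists x; rewrite inE eqxx.
  by rewrite inE => /andP[/eqP->].
rewrite b1.
case: ifP => //= H.
rewrite H /=.
suff -> : [exists z in x |: [set y0 | [exists z0 in [set x], KnxKn_adj n z0 y0]], KnxKn_adj n z y] by [].
have [p /andP[p1 p2]] := ord3 x.1 y.1 n3.
have [q /andP[q1 q2]] := ord3 x.2 y.2 n3.
apply/existsP; exists (p, q); rewrite !inE /KnxKn_adj /= p2 q2 /= andbT.
by apply/orP; right; apply/existsP; exists x; rewrite !inE eqxx /= eq_sym p1 eq_sym q1.
Qed.


Ltac kill := repeat match goal with
 | H : is_true (?u != ?v) |- context [?u == ?v] => rewrite (negbTE H)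
 | H : is_true (?u != ?v) |- context [?v == ?u] => rewrite [v == u]eq_sym (negbTE H)
 end; rewrite ?eqxx /=; try done.

Lemma dz_row n (a b c : 'I_n) (z : 'I_n * 'I_n) : b != c ->
  absdiff (D (a,b) z) (D (a,c) z) = (z.2 == b) + (z.2 == c) + (z == (a,b)) + (z == (a,c)).
Proof.
move=> bc; case: z => p q; rewrite /D /absdiff !xpair_eqE /=.
case: (boolP (p == a)) => [/eqP->|pa]; case: (boolP (q == b)) => [/eqP->|qb]; kill;
 try case: (boolP (q == c)) => [/eqP->|qc]; kill.

Qed.

Lemma dz_col n (a b c : 'I_n) (z : 'I_n * 'I_n) : a != c ->
  absdiff (D (a,b) z) (D (c,b) z) = (z.1 == a) + (z.1 == c) + (z == (a,b)) + (z == (c,b)).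
Proof.
move=> ac; case: z => p q; rewrite /D /absdiff !xpair_eqE /=.
case: (boolP (p == a)) => [/eqP->|pa]; case: (boolP (q == b)) => [/eqP->|qb]; kill;
 try case: (boolP (p == c)) => [/eqP->|pc]; kill.
Qed.

Lemma dz_gen n (a b c d : 'I_n) (z : 'I_n * 'I_n) : a != c -> b != d ->
  absdiff (D (a,b) z) (D (c,d) z) + (z == (a,b)) + (z == (c,d)) + 2 * (z == (a,d)) + 2 * (z == (c,b))
  = (z.1 == a) + (z.1 == c) + (z.2 == b) + (z.2 == d).
Proof.
move=> ac bd; case: z => p q; rewrite /D /absdiff !xpair_eqE /=.
case: (boolP (p == a)) => [/eqP->|pa]; case: (boolP (q == b)) => [/eqP->|qb]; kill;
 try case: (boolP (p == c)) => [/eqP->|pc]; kill;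
 try case: (boolP (q == d)) => [/eqP->|qd]; kill.
Qed.

Lemma card_indic (T : finType) (A : {set T}) : \sum_(z : T) (z \in A) = #|A|.
Proof. by rewrite -sum1_card [RHS]big_mkcond /=; apply: eq_bigr => z _; case: (z \in A). Qed.

Lemma sum_col n (S : {set 'I_n * 'I_n}) (b : 'I_n) :
  \sum_(z in S) (z.2 == b) = #|[set i | (i, b) \in S]|.
Proof.
rewrite big_mkcond /= -card_indic.
rewrite (eq_bigr (fun z => ((z.1, z.2) \in S) * (z.2 == b))); last first.
  by move=> [i j] _ /=; case: ifP => _; rewrite ?mul1n ?mul0n.
rewrite -(pair_big xpredT xpredT (fun (i j : 'I_n) => ((i, j) \in S) * (j == b))) /=.
apply: eq_bigr => i _; rewrite (bigD1 b) //= big1 ?addn0 ?inE ?eqxx ?muln1 //.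
by move=> j /negbTE ->; rewrite muln0.
Qed.

Lemma sum_row n (S : {set 'I_n * 'I_n}) (a : 'I_n) :
  \sum_(z in S) (z.1 == a) = #|[set j | (a, j) \in S]|.
Proof.
rewrite big_mkcond /= -card_indic.
rewrite (eq_bigr (fun z => (z.1 == a) * ((z.1, z.2) \in S))); last first.
  by move=> [i j] _ /=; case: ifP => _; rewrite ?mul1n ?muln1 ?mul0n ?muln0.
rewrite -(pair_big xpredT xpredT (fun (i j : 'I_n) => (i == a) * ((i, j) \in S))) /=.
rewrite (bigD1 a) //= [X in _ + X]big1 ?addn0; last by move=> i /negbTE ia; apply: big1 => j _; rewrite ia.
by apply: eq_bigr => j _; rewrite eqxx mul1n inE.
Qed.

Lemma sum_pt n (S : {set 'I_n * 'I_n}) (w : 'I_n * 'I_n) :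
  \sum_(z in S) (z == w) = (w \in S).
Proof.
case: (boolP (w \in S)) => wS.
  by rewrite (bigD1 w) //= eqxx big1 // => z /andP[_ /negbTE ->].
by rewrite big1 // => z zS; case: eqP => // e; move: wS; rewrite -e zS.
Qed.

Lemma card_cols n (A : {set 'I_n * 'I_n}) :
  #|A| = \sum_(j < n) #|[set i | (i, j) \in A]|.
Proof.
rewrite -[LHS]card_indic.
transitivity (\sum_(i < n) \sum_(j < n) (((i, j) \in A) : nat)).
  by rewrite pair_bigA; apply: eq_bigr => -[].
rewrite exchange_big /=.
by apply: eq_bigr => j _; rewrite -card_indic; apply: eq_bigr => i _; rewrite inE.
Qed.
Lemma ord_other n (b : 'I_n) : 2 <= n -> exists c : 'I_n, c != b.
Proof.
move=> n2.
have h0 : 0 < n by lia. have h1 : 1 < n by lia.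
case: (boolP (Ordinal h0 != b)) => [H|H]; first by exists (Ordinal h0).
exists (Ordinal h1); move: H; rewrite -!val_eqE /=; lia.
Qed.

Lemma comb n t (R : 'I_n -> {set 'I_n}) :
  2 <= n -> t.+1 <= n ->
  (forall a b c, b != c -> #|R b| + #|R c| + (a \in R b) + (a \in R c) <= 2*t+3) ->
  \sum_(j < n) #|R j| <= t * n + n %/ t.+1.
Proof.
move=> n2 tn H.
have cardn : forall A : {set 'I_n}, #|A| <= n.
  by move=> A; rewrite -[X in _ <= X]card_ord max_card.
have q1 : 1 <= n %/ t.+1 by rewrite leq_divRL // mul1n.
case: (boolP [exists b, t.+2 <= #|R b|]) => [/existsP[b Hb]|].
- pose K := if 2*t+2 <= n then 2*t+2 else 2*t+1.
  have HK : forall c, c != b -> #|R c| + #|R b| <= K.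
    move=> c cb.
    have [a0 a0b] : exists a0, a0 \in R b.
      by apply/set0Pn; rewrite -card_gt0; lia.
    have bc : b != c by rewrite eq_sym.
    have h1 := H a0 b c bc.
    rewrite a0b in h1.
    rewrite /K; case: ifP => nb; first by lia.
    case: (boolP [exists a, (a \in R b) && (a \in R c)]) => [/existsP[a /andP[ab ac]]|].
      by have := H a b c bc; rewrite ab ac; lia.
    rewrite negb_exists => /forallP dis.
    have e : R b :&: R c = set0.
      apply/setP => a; rewrite !inE; have := dis a; by case: (a \in R b); case: (a \in R c).
    have := cardsU (R b) (R c); rewrite e cards0 subn0 => e2.
    have := cardn (R b :|: R c); lia.
  have [c0 c0b] := ord_other b n2.
  have Kb : #|R b| <= K by have := HK c0 c0b; lia.
  rewrite (bigD1 b) //=.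
  have : \sum_(j < n | j != b) #|R j| <= \sum_(j < n | j != b) (K - #|R b|).
    by apply: leq_sum => j jb; have := HK j jb; lia.
  rewrite sum_nat_const cardC1 card_ord.
  have q2 : 2*t+2 <= n -> 2 <= n %/ t.+1.
    by move=> h; rewrite leq_divRL //; lia.
  move: Kb; rewrite /K; case: ifP => nb Kb Hs.
  + have := q2 nb => q.
    set x := #|R b| in Kb Hb Hs *; set s := \sum_(i < n | i != b) #|R i| in Hs *.
    have [y ey] : exists y, 2*t+2 - x = y by eexists.
    rewrite ey in Hs.
    have hy : y <= t by lia.
    have hm : (n.-1 - 1) * y <= (n.-1 - 1) * t by apply: leq_mul.
    have [m hm0] : exists m, n = m.+2 by exists (n-2); lia.
    move: hm Hs; rewrite hm0 /= subn1 /=; rewrite hm0 in q q1 |- *.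
    nia.
  + set x := #|R b| in Kb Hb Hs *; set s := \sum_(i < n | i != b) #|R i| in Hs *.
    have [y ey] : exists y, 2*t+1 - x = y by eexists.
    rewrite ey in Hs.
    have hy : y + 1 <= t by lia.
    have hm : (n.-1 - 1) * y <= (n.-1 - 1) * t by apply: leq_mul; lia.
    have [m hm0] : exists m, n = m.+2 by exists (n-2); lia.
    move: hm Hs; rewrite hm0 /= subn1 /=; rewrite hm0 in q1 |- *.
    nia.
- rewrite negb_exists => /forallP small.
  pose H' := [set j | #|R j| == t.+1].
  have s1 : \sum_(j < n) #|R j| <= \sum_(j < n) (t + (j \in H')).
    apply: leq_sum => j _; have := small j; rewrite inE; case: eqP; lia.
  rewrite big_split /= sum_nat_const card_ord card_indic in s1.
  suff h : #|H'| <= n %/ t.+1 by rewrite mulnC; apply: (leq_trans s1); rewrite leq_add2l.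
  rewrite leq_divRL //.
  have e : #|H'| * t.+1 = \sum_(j in H') #|R j|.
    by rewrite -sum_nat_const; apply: eq_bigr => j; rewrite inE => /eqP.
  rewrite e.
  have e2 : \sum_(j in H') #|R j| = \sum_(i < n) \sum_(j in H') (i \in R j).
    by rewrite exchange_big /=; apply: eq_bigr => j _; rewrite card_indic.
  rewrite e2.
  have b1 : forall i : 'I_n, \sum_(j in H') (i \in R j) <= 1.
    move=> i.
    rewrite (eq_bigr (fun j => if i \in R j then 1 else 0)); last by move=> j _; case: (i \in R j).
    rewrite -big_mkcondr sum1dep_card.
    apply/card_le1_eqP => j j'; rewrite !inE => /andP[/eqP hj ij] /andP[/eqP hj' ij'].
    apply/eqP; apply/negPn/negP; rewrite eq_sym => jj; have := H i j j' jj; rewrite ij ij' hj hj'; lia.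
  apply: (@leq_trans (\sum_(i < n) 1)); first by apply: leq_sum => i _; exact: b1.
  by rewrite sum_nat_const card_ord muln1.
Qed.

Definition dl (n j i : nat) : nat := if j <= i then i - j else i + n - j.
Definition sp (n t j : nat) : bool := (j %% t.+1 == 0) && (j %/ t.+1 < n %/ t.+1).
Definition hr (n t a : nat) : bool := (t <= a) && sp n t (a - t).
Definition inW (n t i j : nat) : bool := (dl n j i < t) || ((dl n j i == t) && sp n t j).

Lemma sp_facts n t j : sp n t j -> j = (j %/ t.+1) * t.+1 /\ j + t < n.
Proof.
case/andP => /eqP m0 lq.
have e : j = (j %/ t.+1) * t.+1 by rewrite {1}(divn_eq j t.+1) m0 addn0.
split => //.
have h1 : (j %/ t.+1).+1 * t.+1 <= n %/ t.+1 * t.+1 by rewrite leq_mul2r lq orbT.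
have h2 := leq_trunc_div n t.+1.
rewrite mulSn in h1. lia.
Qed.

Lemma inW_le n t i j : inW n t i j -> dl n j i <= t.
Proof. by case/orP => [/ltnW //|/andP[/eqP -> _]]. Qed.

Lemma col_range n t i j : j + t < n -> i < n -> inW n t i j -> j <= i <= j + t.
Proof. move=> h1 h2 /inW_le; rewrite /dl; case: ifP; lia. Qed.

Lemma row_range n t a b : t <= a -> a < n -> b < n -> inW n t a b -> b <= a <= b + t.
Proof. move=> h0 h1 h2 /inW_le; rewrite /dl; case: ifP; lia. Qed.

Lemma block n t j1 j2 x : sp n t j1 -> sp n t j2 -> j1 <= x <= j1 + t -> j2 <= x <= j2 + t -> j1 = j2.
Proof.
move=> /sp_facts[e1 _] /sp_facts[e2 _] r1 r2.
suff : j1 %/ t.+1 = j2 %/ t.+1 by move=> h; rewrite e1 e2 h.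
have d : forall j, j = (j %/ t.+1) * t.+1 -> j <= x <= j + t -> x %/ t.+1 = j %/ t.+1.
  move=> j ej rj.
  have -> : x = j %/ t.+1 * t.+1 + (x - j) by rewrite -ej; clear -rj; move: rj; case/andP; lia.
  have hs : x - j < t.+1 by move: rj; case/andP; clear; lia.
  by rewrite divnMDl // (divn_small hs) addn0.
by rewrite -(d j1) // -(d j2).
Qed.

Lemma cell_in n t j : sp n t j -> inW n t (j + t) j.
Proof. by move=> s; rewrite /inW /dl leq_addr addKn ltnn eqxx s. Qed.

Lemma card_lt n m : m <= n -> #|[set k : 'I_n | k < m]| = m.
Proof.
move=> h.
have -> : [set k : 'I_n | k < m] = [set widen_ord h k | k in 'I_m].
  apply/setP => k; rewrite !inE; apply/idP/imsetP => [km|[k' _ ->]].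
  by exists (Ordinal km) => //; apply: val_inj.
  by rewrite /= ltn_ord.
rewrite card_imset ?card_ord //.
by move=> x y /(congr1 val) /= /val_inj.
Qed.

Lemma dl_lt n j i : i < n -> j < n -> dl n j i < n.
Proof. rewrite /dl; case: ifP; lia. Qed.

Lemma col_count n t (j : 'I_n) : t < n -> #|[set i : 'I_n | inW n t i j]| = t + sp n t j.
Proof.
move=> tn.
pose f := fun i : 'I_n => Ordinal (dl_lt (ltn_ord i) (ltn_ord j)).
have finj : injective f.
  move=> i1 i2 /(congr1 val) /=; rewrite /dl => e; apply: val_inj => /=.
  move: e (ltn_ord i1) (ltn_ord i2) (ltn_ord j); case: ifP; case: ifP; lia.
have -> : [set i : 'I_n | inW n t i j] = f @^-1: [set k : 'I_n | k < t + sp n t j].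
  apply/setP => i; rewrite !inE /inW /=; case: (sp n t j); rewrite ?andbT ?andbF ?orbF; lia.
rewrite card_preimset // card_lt //; case: (sp n t j); lia.
Qed.

Lemma row_count n t (a : 'I_n) : t < n -> #|[set j : 'I_n | inW n t a j]| <= t + hr n t a.
Proof.
move=> tn.
pose f := fun j : 'I_n => Ordinal (dl_lt (ltn_ord a) (ltn_ord j)).
have finj : injective f.
  move=> i1 i2 /(congr1 val) /=; rewrite /dl => e; apply: val_inj => /=.
  move: e (ltn_ord i1) (ltn_ord i2) (ltn_ord a); case: ifP; case: ifP; lia.
have sub : [set j : 'I_n | inW n t a j] \subset
           f @^-1: [set k : 'I_n | k < t] :|: [set j : 'I_n | hr n t a && (val j == a - t)].
  apply/subsetP => j; rewrite !inE /inW /= => /orP[->//|/andP[/eqP e s]].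
  have [_ jt] := sp_facts s.
  have ea : (a : nat) = j + t by move: e jt (ltn_ord a); rewrite /dl; case: ifP; lia.
  by rewrite /hr ea leq_addl addnK s eqxx orbT.
apply: (leq_trans (subset_leq_card sub)).
apply: (leq_trans (leq_card_setU _ _).1).
rewrite card_preimset // card_lt ?(ltnW tn) // leq_add2l.
case: (hr n t a); last by rewrite leqn0 cards_eq0; apply/eqP/setP => j; rewrite !inE.
apply/card_le1_eqP => j1 j2; rewrite !inE /= => /eqP e1 /eqP e2; by apply: val_inj; move: e1 e2 => /= -> ->.
Qed.

Lemma DeltaS_row n (S : {set 'I_n * 'I_n}) (a b c : 'I_n) : 3 <= n -> b != c ->
  Delta_S (KnxKn_adj n) S (a, b) (a, c) =
  #|[set i | (i, b) \in S]| + #|[set i | (i, c) \in S]| + ((a, b) \in S) + ((a, c) \in S).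
Proof.
move=> n3 bc; rewrite /Delta_S /Delta_z.
under eq_bigr => z _ do rewrite !gdistE // dz_row //.
by rewrite !big_split /= !sum_col !sum_pt.
Qed.

Lemma DeltaS_col n (S : {set 'I_n * 'I_n}) (a b c : 'I_n) : 3 <= n -> a != c ->
  Delta_S (KnxKn_adj n) S (a, b) (c, b) =
  #|[set j | (a, j) \in S]| + #|[set j | (c, j) \in S]| + ((a, b) \in S) + ((c, b) \in S).
Proof.
move=> n3 ac; rewrite /Delta_S /Delta_z.
under eq_bigr => z _ do rewrite !gdistE // dz_col //.
by rewrite !big_split /= !sum_row !sum_pt.
Qed.

Lemma sum_pt2 n (S : {set 'I_n * 'I_n}) (w : 'I_n * 'I_n) :
  \sum_(z in S) 2 * (z == w) = 2 * (w \in S).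
Proof. by rewrite -sum_pt big_distrr. Qed.

Lemma DeltaS_gen n (S : {set 'I_n * 'I_n}) (a b c d : 'I_n) : 3 <= n -> a != c -> b != d ->
  Delta_S (KnxKn_adj n) S (a, b) (c, d) + ((a, b) \in S) + ((c, d) \in S)
   + 2 * ((a, d) \in S) + 2 * ((c, b) \in S) =
  #|[set j | (a, j) \in S]| + #|[set j | (c, j) \in S]| +
  #|[set i | (i, b) \in S]| + #|[set i | (i, d) \in S]|.
Proof.
move=> n3 ac bd.
rewrite -(sum_pt S (a,b)) -(sum_pt S (c,d)) -(sum_pt2 S (a,d)) -(sum_pt2 S (c,b)) /Delta_S -!big_split.
rewrite -(sum_row S a) -(sum_row S c) -(sum_col S b) -(sum_col S d) -!big_split.
by apply: eq_bigr => z _; rewrite /Delta_z !gdistE //; exact: dz_gen.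
Qed.

Lemma compl_col n (S : {set 'I_n * 'I_n}) (b : 'I_n) :
  #|[set i | (i, b) \in S]| + #|[set i | (i, b) \notin S]| = n.
Proof.
have -> : [set i | (i, b) \notin S] = ~: [set i | (i, b) \in S].
  by apply/setP => i; rewrite !inE.
by rewrite cardsC card_ord.
Qed.

Lemma compl_row n (S : {set 'I_n * 'I_n}) (a : 'I_n) :
  #|[set j | (a, j) \in S]| + #|[set j | (a, j) \notin S]| = n.
Proof.
have -> : [set j | (a, j) \notin S] = ~: [set j | (a, j) \in S].
  by apply/setP => i; rewrite !inE.
by rewrite cardsC card_ord.
Qed.

Lemma count_sp n t : \sum_(j < n) sp n t j = n %/ t.+1.
Proof.
have gP : forall m : 'I_(n %/ t.+1), m * t.+1 < n.
  move=> m; have h := ltn_ord m; have h2 := leq_trunc_div n t.+1.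
  have : m.+1 * t.+1 <= n %/ t.+1 * t.+1 by rewrite leq_mul2r h orbT.
  rewrite mulSn; lia.
pose g := fun m : 'I_(n %/ t.+1) => (Ordinal (gP m) : 'I_n).
have ginj : injective g.
  by move=> m1 m2 /(congr1 val) /= /eqP; rewrite eqn_mul2r /= => /eqP /val_inj.
have -> : \sum_(j < n) sp n t j = #|[set j : 'I_n | sp n t j]|.
  by rewrite -card_indic; apply: eq_bigr => j _; rewrite inE.
have -> : [set j : 'I_n | sp n t j] = [set g m | m in 'I_(n %/ t.+1)].
  apply/setP => j; rewrite inE; apply/idP/imsetP => [s|[m _ ->]].
    have [e _] := sp_facts s.
    have mq : j %/ t.+1 < n %/ t.+1 by case/andP: s.
    by exists (Ordinal mq) => //; apply: val_inj => /=.
  by rewrite /sp /= modnMl mulnK // eqxx ltn_ord.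
by rewrite card_imset // card_ord.
Qed.
Lemma comb_arith {n t : nat} {xW yW adW cbW hA hC sB sD : bool} {a b c d : nat} :
  6 <= n -> 1 <= t -> t <= n - 3 -> a != c -> b != d ->
  (hA -> n <= t + 4 -> a = t \/ n = t + 4 /\ a = t + t.+1) ->
  (hC -> n <= t + 4 -> c = t \/ n = t + 4 /\ c = t + t.+1) ->
  (sB -> n <= t + 4 -> b = 0 \/ n = t + 4 /\ b = t.+1) ->
  (sD -> n <= t + 4 -> d = 0 \/ n = t + 4 /\ d = t.+1) ->
  (sB -> a = b + t -> xW) -> (sD -> a = d + t -> adW) ->
  (sB -> c = b + t -> cbW) -> (sD -> c = d + t -> yW) ->
  hA + hC + sB + sD + 2 * t + 5 <= 2 * n + (xW + yW + 2 * adW + 2 * cbW).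
Proof.
move=> n6 t1 tn /eqP ac /eqP bd s1 s2 s3 s4 c1 c2 c3 c4.
case: (leqP n (t + 4)) => nt; last first.
  have : hA + hC + sB + sD <= 4 by clear s1 s2 s3 s4 c1 c2 c3 c4; case: hA; case: hC; case: sB; case: sD.
  lia.
case: hA s1 => [/(_ isT nt) s1|_]; case: hC s2 => [/(_ isT nt) s2|_];
case: sB s3 c1 c3 => [/(_ isT nt) s3 /(_ isT) c1 /(_ isT) c3|_ c1 c3];
case: sD s4 c2 c4 => [/(_ isT nt) s4 /(_ isT) c2 /(_ isT) c4|_ c2 c4];
rewrite ?addn0 ?add0n;
repeat match goal with H : _ \/ _ |- _ => case: H => [H|[H H']] end;
case: xW c1; case: yW c4; case: adW c2; case: cbW c3; lia.
Qed.
Lemma gen_arith {n t De rA rC cB cD : nat} {xW yW adW cbW hA hC sB sD : bool} :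
  De + ~~ xW + ~~ yW + 2 * ~~ adW + 2 * ~~ cbW = rA + rC + cB + cD ->
  cD + (t + sD) = n -> cB + (t + sB) = n -> n <= rC + (t + hC) -> n <= rA + (t + hA) ->
  hA + hC + sB + sD + 2 * t + 5 <= 2 * n + (xW + yW + 2 * adW + 2 * cbW) ->
  2 * n - 2 * t - 1 <= De.
Proof.
move=> E k1 k2 k3 k4 H.
move: E H; case: xW; case: yW; case: adW; case: cbW => /= E H; lia.
Qed.

Definition Wset n t : {set 'I_n * 'I_n} := [set z : 'I_n * 'I_n | inW n t z.1 z.2].

Lemma sp_small n t j : 6 <= n -> 1 <= t -> n <= t + 4 -> sp n t j ->
  j = 0 \/ (n = t + 4 /\ j = t.+1).
Proof.
move=> n6 t1 nt s; have [e _] := sp_facts s.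
have lq : j %/ t.+1 < n %/ t.+1 by case/andP: s.
have h2 := leq_trunc_div n t.+1.
have h1 : (j %/ t.+1).+1 * t.+1 <= n by apply: leq_trans h2; rewrite leq_mul2r lq orbT.
move: e h1; case: (j %/ t.+1) => [|[|m]] e h1.
- by left; rewrite e.
- right; rewrite e mul1n; rewrite mulSn mul1n in h1; lia.
- exfalso; move: h1; rewrite !mulSn; lia.
Qed.

Lemma resolving n t : 6 <= n -> 1 <= t -> t <= n - 3 ->
  weak_k_resolving (KnxKn_adj n) (2 * n - 2 * t - 1) (~: Wset n t).
Proof.
move=> n6 t1 tn [a b] [c d] xy.
have n3 : 3 <= n by lia.
have tn' : t < n by lia.
set S := ~: Wset n t.
have inS : forall i j : 'I_n, ((i, j) \in S) = ~~ inW n t i j by move=> i j; rewrite !inE.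
have cS : forall j : 'I_n, #|[set i | (i, j) \in S]| + (t + sp n t j) = n.
  move=> j; have e : [set i | (i, j) \notin S] = [set i : 'I_n | inW n t i j].
    by apply/setP => i; rewrite !inE negbK.
  by have := compl_col S j; rewrite e col_count.
have rS : forall i : 'I_n, n <= #|[set j | (i, j) \in S]| + (t + hr n t i).
  move=> i; have e : [set j | (i, j) \notin S] = [set j : 'I_n | inW n t i j].
    by apply/setP => j; rewrite !inE negbK.
  have := compl_row S i; rewrite e => h; have := row_count i tn'; lia.
case: (boolP (a == c)) => [/eqP ac | ac].
  subst c.
  have bd : b != d by move: xy; rewrite xpair_eqE eqxx.
  rewrite DeltaS_row //.
  have F3 : sp n t b -> sp n t d -> inW n t a b -> inW n t a d -> False.
    move=> sb sd wb wd.
    have [_ hb] := sp_facts sb; have [_ hd] := sp_facts sd.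
    have := block sb sd (col_range hb (ltn_ord a) wb) (col_range hd (ltn_ord a) wd).
    by move/val_inj => e; move: bd; rewrite e eqxx.
  have := cS b; have := cS d; rewrite !inS; lia.
case: (boolP (b == d)) => [/eqP bd | bd].
  subst d.
  rewrite DeltaS_col //.
  have F4 : hr n t a -> hr n t c -> inW n t a b -> inW n t c b -> False.
    move=> /andP[ta sa] /andP[tc sc] wa wc.
    have ra := row_range ta (ltn_ord a) (ltn_ord b) wa.
    have rc := row_range tc (ltn_ord c) (ltn_ord b) wc.
    have := block sa sc (_ : a - t <= b <= a - t + t) (_ : c - t <= b <= c - t + t).
    move=> h; have e : (a : nat) = c by have := h ltac:(lia) ltac:(lia); lia.
    by move: ac; rewrite (val_inj e) eqxx.
  have := rS a; have := rS c; rewrite !inS; lia.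
have E := DeltaS_gen S n3 ac bd.
rewrite !inS in E.
have := rS a; have := rS c; have := cS b; have := cS d.
have hA : forall i : 'I_n, hr n t i -> n <= t + 4 -> (i : nat) = t \/ (n = t + 4 /\ (i : nat) = t + t.+1).
  move=> i /andP[ti si] nt; case: (sp_small n6 t1 nt si); lia.
have sB : forall j : 'I_n, sp n t j -> n <= t + 4 -> (j : nat) = 0 \/ (n = t + 4 /\ (j : nat) = t.+1).
  by move=> j sj nt; apply: sp_small.
have cell : forall i j : 'I_n, sp n t j -> (i : nat) = j + t -> inW n t i j.
  by move=> i j s e; rewrite e; apply: cell_in.
have := hA a; have := hA c; have := sB b; have := sB d.
have := cell a b; have := cell a d; have := cell c b; have := cell c d.
have ac' : (a : nat) != c by [].
have bd' : (b : nat) != d by [].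
move=> c1 c2 c3 c4 s1 s2 s3 s4 k1 k2 k3 k4.
exact: (gen_arith E k1 k2 k3 k4 (comb_arith n6 t1 tn ac' bd' s4 s3 s2 s1 c4 c3 c2 c1)).
Qed.

Lemma H_arith {n t x y u v : nat} {p q : bool} :
  2 * n - 2 * t - 1 <= x + y + p + q -> x + u = n -> y + v = n ->
  u + v + ~~ p + ~~ q <= 2 * t + 3.
Proof. by case: p; case: q => /=; lia. Qed.

Lemma fin_arith {s x N B : nat} : s + x = N -> x <= B -> N - B <= s.
Proof. lia. Qed.

Theorem mainTheorem11 (n t : nat) :
  6 <= n -> 1 <= t -> t <= n - 3 ->
  is_wdim (KnxKn_adj n) (2 * n - 2 * t - 1) (n ^ 2 - t * n - n %/ t.+1).
Proof.
move=> n6 t1 tn.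
have n3 : 3 <= n by lia.
have tn' : t < n by lia.
split.
  exists (~: Wset n t); split; first exact: resolving.
  have := cardsC (Wset n t); rewrite card_prod !card_ord.
  have -> : #|Wset n t| = t * n + n %/ t.+1.
    rewrite card_cols (eq_bigr (fun j : 'I_n => t + sp n t j)); last first.
      by move=> j _; rewrite -col_count //; apply: eq_card => i; rewrite !inE.
    by rewrite big_split /= sum_nat_const card_ord count_sp mulnC.
  by move=> h; rewrite -mulnn -h -subnDA addKn.
move=> S HS.
pose R := fun j : 'I_n => [set i | (i, j) \notin S].
have H : forall a b c, b != c -> #|R b| + #|R c| + (a \in R b) + (a \in R c) <= 2 * t + 3.
  move=> a b c bc.
  have xy : (a, b) != (a, c) by rewrite xpair_eqE eqxx.
  have := HS _ _ xy; rewrite DeltaS_row // => h.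
  rewrite /R !inE; exact: (H_arith h (compl_col S b) (compl_col S c)).
have := comb (_ : 2 <= n) (_ : t.+1 <= n) H.
have e : #|~: S| = \sum_(j < n) #|R j|.
  by rewrite card_cols; apply: eq_bigr => j _; apply: eq_card => i; rewrite !inE.
have := cardsC S; rewrite card_prod !card_ord e -mulnn => h1 h2.
have h := h2 ltac:(lia) ltac:(lia).
rewrite -subnDA; exact: (fin_arith h1 h).
Qed.
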